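(* In the setting below, let $p,q\in X$ have the same support $S_p=S_q$ with $|S_p|>2$. If both $p$ and $q$ have strange indices, then these strange indices coincide.
   Context: Setting: $E=\{e_0,\dots,e_n\}\subset\mathbb R^n$ is the vertex set of an $n$-simplex with $e_0+\cdots+e_n=0$, and $X\subset\mathbb R^n\setminus\{0\}$ is a finite set with $E\subseteq X$, no element of $X$ a positive multiple of another, such that every $n+1$ points of $X$ are in good position. (A finite set $A$ is in conical position if $0\notin\operatorname{conv}A$ and no point of $A$ lies in the positive hull—set of nonnegative linear combinations—of the other points; it is in good position otherwise.) For $p\in X$, the support $S_p$ is the minimal subset of $E$ whose positive hull contains $p$; then $p=\sum_{e_i\in S_p}\lambda_ie_i$ uniquely with all $\lambda_i>0$. Convention: each $p\in X$ is replaced by the positive multiple for which $\min_{e_i\in S_p}\lambda_i=1$. An element $e_j\in S_p$ is a strange index of $p$ if $\lambda_j>1$ (under these hypotheses there is at most one). *)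

(* Defs.v *)
From HB Require Import structures.
From mathcomp Require Import all_boot all_order all_algebra.
Set Implicit Arguments. Unset Strict Implicit. Unset Printing Implicit Defensive.
Import Order.TTheory GRing.Theory Num.Theory.
Local Open Scope ring_scope.

Section Defs.
Variables (R : realFieldType) (n : nat).
Notation V := 'rV[R]_n.

Definition in_pos_hull (A : seq V) (v : V) : Prop :=
  exists c : V -> R, (forall a, 0 <= c a) /\ v = \sum_(a <- undup A) c a *: a.

Definition in_conv_hull (A : seq V) (v : V) : Prop :=
  exists c : V -> R, (forall a, 0 <= c a) /\ \sum_(a <- undup A) c a = 1 /\
                     v = \sum_(a <- undup A) c a *: a.

Definition conical_position (A : seq V) : Prop :=
  ~ in_conv_hull A 0 /\
  forall a, a \in A -> ~ in_pos_hull [seq b <- A | b != a] a.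

Definition good_position (A : seq V) : Prop := ~ conical_position A.

Definition affinely_independent (e : 'I_n.+1 -> V) : Prop :=
  forall c : 'I_n.+1 -> R, \sum_i c i = 0 -> \sum_i c i *: e i = 0 ->
    forall i, c i = 0.

Definition verts (e : 'I_n.+1 -> V) (S : {set 'I_n.+1}) : seq V :=
  [seq e i | i <- enum S].

Definition is_support (e : 'I_n.+1 -> V) (p : V) (S : {set 'I_n.+1}) : Prop :=
  in_pos_hull (verts e S) p /\
  forall S' : {set 'I_n.+1}, S' \proper S -> ~ in_pos_hull (verts e S') p.

Definition strange_index (e : 'I_n.+1 -> V) (p : V) (S : {set 'I_n.+1})
  (j : 'I_n.+1) : Prop :=
  j \in S /\
  exists (c : R) (lam : 'I_n.+1 -> R),
    [/\ 0 < c,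
        c *: p = \sum_(i in S) lam i *: e i,
        (forall i, i \in S -> 1 <= lam i),
        (exists2 i, i \in S & lam i = 1) &
        1 < lam j].

End Defs.

(* Main.v *)
Require Import Defs.
From HB Require Import structures.
From mathcomp Require Import all_boot all_order all_algebra.
From mathcomp Require Import lra ring.
Import Order.TTheory GRing.Theory Num.Theory.
Local Open Scope ring_scope.

Lemma keyK (R : realFieldType) (n : nat) (e : 'I_n.+1 -> 'rV[R]_n)
  (Hai : affinely_independent e) (Hs : \sum_i e i = 0)
  (z w : 'I_n.+1 -> R) :
  \sum_i z i *: e i = 0 -> \sum_i w i = 0 -> \sum_i w i * z i = 0.
Proof.
move=> Hz Hw.
set mu := (\sum_i z i) / (n.+1)%:R.
have H := Hai (fun i => z i - mu).
have h1 : \sum_i (z i - mu) = 0.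
  rewrite sumrB sumr_const card_ord /mu -[(_ / _) *+ _]mulr_natr divfK ?subrr //.
  by rewrite pnatr_eq0.
have h2 : \sum_i (z i - mu) *: e i = 0.
  under eq_bigr do rewrite scalerBl.
  by rewrite sumrB -scaler_sumr Hs scaler0 subr0.
have hz i : z i = mu by apply/eqP; rewrite -subr_eq0; apply/eqP; exact: H.
under eq_bigr do rewrite hz.
by rewrite -mulr_suml Hw mul0r.
Qed.
Arguments keyK {R n e}.

Definition ev {R : realFieldType} {n : nat} (w y : 'I_n.+1 -> R) :=
  \sum_i w i * y i.

Lemma comb (R : realFieldType) (n : nat) (e : 'I_n.+1 -> 'rV[R]_n)
  (K : eqType) (r : seq K) (f : K -> 'rV[R]_n) (x : K -> 'I_n.+1 -> R)
  (s : K -> R)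
  (Hrep : forall k, k \in r -> 0 < s k /\ s k *: f k = \sum_i x k i *: e i)
  (w : 'I_n.+1 -> R) (Q : 'rV[R]_n -> Prop) (c : 'rV[R]_n -> R)
  (U : seq 'rV[R]_n) :
  (forall b, 0 <= c b) ->
  (forall b, b \in U -> exists2 k, k \in r &
     [/\ f k = b, 0 <= ev w (x k) & (c b * ev w (x k) = 0 -> Q b)]) ->
  exists y, \sum_(b <- U) c b *: b = \sum_i y i *: e i /\ 0 <= ev w y /\
    (ev w y = 0 -> forall b, b \in U -> Q b).
Proof.
move=> Hc; elim: U => [|b U IH] HU.
  exists (fun _ => 0); split; first by rewrite big_nil; under eq_bigr do rewrite scale0r; rewrite big1.
  split; last by [].
  by rewrite /ev big1 // => i _; rewrite mulr0.
have [y [Hy [Hy0 HyQ]]] : exists y, \sum_(b <- U) c b *: b = \sum_i y i *: e i /\ 0 <= ev w y /\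
    (ev w y = 0 -> forall b, b \in U -> Q b).
  by apply: IH => b' hb'; apply: HU; rewrite inE hb' orbT.
have [k kr [fkb evk HQ]] := HU b (mem_head _ _).
have [sk Hk] := Hrep k kr.
set a := c b / s k.
have ha : 0 <= a by rewrite /a divr_ge0 // ltW.
exists (fun i => a * x k i + y i); split.
  rewrite big_cons Hy.
  have -> : c b *: b = a *: (s k *: f k).
    by rewrite scalerA /a divfK ?fkb // gt_eqF.
  rewrite Hk scaler_sumr -big_split /=; apply: eq_bigr => i _.
  by rewrite scalerA scalerDl.
have hev : ev w (fun i => a * x k i + y i) = a * ev w (x k) + ev w y.
  rewrite /ev big_distrr -big_split /=; apply: eq_bigr => i _.
  by rewrite mulrDr mulrCA.
rewrite hev; split; first by rewrite addr_ge0 // mulr_ge0.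
move=> /eqP; rewrite paddr_eq0; [|exact: mulr_ge0|exact: Hy0]; move=> /andP [/eqP h1 /eqP h2] b'.
rewrite inE => /orP [/eqP -> | hb']; last exact: HyQ.
apply: HQ; move/eqP: h1; rewrite /a mulf_eq0 => /orP [|/eqP ->]; last by rewrite mulr0.
by rewrite mulf_eq0 invr_eq0 (gt_eqF sk) orbF => /eqP ->; rewrite mul0r.
Qed.

Lemma conical_cert (R : realFieldType) (n : nat) (e : 'I_n.+1 -> 'rV[R]_n)
  (Hai : affinely_independent e) (Hs : \sum_i e i = 0)
  (K : eqType) (r : seq K) (f : K -> 'rV[R]_n) (x : K -> 'I_n.+1 -> R)
  (s : K -> R)
  (Hrep : forall k, k \in r -> 0 < s k /\ s k *: f k = \sum_i x k i *: e i)
  (H1 : exists w, \sum_i w i = 0 /\ forall k, k \in r -> 0 < ev w (x k))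
  (H2 : forall k, k \in r -> exists w, \sum_i w i = 0 /\ ev w (x k) < 0 /\
        forall k', k' \in r -> f k' != f k -> 0 <= ev w (x k')) :
  conical_position [seq f k | k <- r].
Proof.
split.
  move=> [c [Hc0 [Hc1 H0]]].
  have [w [Hw Hpos]] := H1.
  have [|y [Hy [_ HQ]]] := @comb R n e K r f x s Hrep w (fun b => c b = 0) c
     (undup [seq f k | k <- r]) Hc0.
    move=> b; rewrite mem_undup => /mapP [k kr ->].
    exists k => //; split => //; first exact: ltW (Hpos k kr).
    by move/eqP; rewrite mulf_eq0 (gt_eqF (Hpos k kr)) orbF => /eqP.
  have : ev w y = 0 by apply: (keyK Hai Hs) => //; rewrite -Hy -H0.
  move/HQ => Hz.
  have : \sum_(a <- undup [seq f k | k <- r]) c a = 0 by rewrite big1_seq // => b /andP [_ /Hz].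
  by rewrite Hc1 => /eqP; rewrite oner_eq0.
move=> a /mapP [k kr ->] [c [Hc Ha]].
have [w [Hw [Hneg Hnn]]] := H2 k kr.
have [|y [Hy [Hy0 _]]] := @comb R n e K r f x s Hrep w (fun _ => True) c
   (undup [seq b <- [seq f k | k <- r] | b != f k]) Hc.
  move=> b; rewrite mem_undup mem_filter => /andP [hb /mapP [k' k'r hk']].
  exists k' => //; split => //; apply: Hnn => //; by rewrite -hk'.
have [sk Hk] := Hrep k kr.
have : \sum_i (x k i - s k * y i) *: e i = 0.
  under eq_bigr do rewrite scalerBl -scalerA.
  by rewrite sumrB -Hk -scaler_sumr -Hy -Ha subrr.
move/(keyK Hai Hs)/(_ Hw).
under eq_bigr do rewrite mulrBr mulrCA.
rewrite sumrB -big_distrr /= => /eqP; rewrite subr_eq0 => /eqP Heq.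
have : 0 <= ev w (x k) by rewrite /ev Heq mulr_ge0 // ltW.
by rewrite leNgt Hneg.
Qed.

Definition dl {R : realFieldType} {n : nat} (a : 'I_n.+1) : 'I_n.+1 -> R :=
  fun l => (l == a)%:R.

Definition W {R : realFieldType} {n : nat} (k al : R) (a : 'I_n.+1) (be : R) (b : 'I_n.+1)
  (ga : R) (c : 'I_n.+1) : 'I_n.+1 -> R :=
  fun l => k + al * dl a l + be * dl b l + ga * dl c l.

Lemma sum_dl (R : realFieldType) (n : nat) (a : 'I_n.+1) (y : 'I_n.+1 -> R) :
  \sum_l dl a l * y l = y a.
Proof.
rewrite (bigD1 a) //= /dl eqxx mul1r big1 ?addr0 // => l /negbTE ->.
by rewrite mul0r.
Qed.

Lemma ev_dl (R : realFieldType) (n : nat) (w : 'I_n.+1 -> R) a :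
  ev w (dl a) = w a.
Proof. by rewrite /ev (eq_bigr (fun l => dl a l * w l)) ?sum_dl // => l _; rewrite mulrC. Qed.

Lemma ev_W (R : realFieldType) (n : nat) k al a be b ga c (y : 'I_n.+1 -> R) :
  ev (W k al a be b ga c) y = k * \sum_l y l + al * y a + be * y b + ga * y c.
Proof.
rewrite /ev /W.
rewrite (eq_bigr (fun l => k * y l + al * (dl a l * y l) + be * (dl b l * y l)
   + ga * (dl c l * y l))); last by move=> l _; rewrite !mulrDl !mulrA.
by rewrite !big_split /= -!big_distrr /= !sum_dl.
Qed.

Lemma sum_W (R : realFieldType) (n : nat) k al a be b ga c :
  \sum_l (W k al a be b ga c : 'I_n.+1 -> R) l = k * n.+1%:R + al + be + ga.
Proof.
have := @ev_W R n k al a be b ga c (fun _ => 1).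
rewrite /ev sumr_const card_ord !mulr1 => <-.
by apply: eq_bigr => l _; rewrite mulr1.
Qed.

Lemma keyK2 (R : realFieldType) (n : nat) (e : 'I_n.+1 -> 'rV[R]_n)
  (Hai : affinely_independent e) (Hs : \sum_i e i = 0)
  (y1 y2 w : 'I_n.+1 -> R) :
  \sum_i y1 i *: e i = \sum_i y2 i *: e i -> \sum_i w i = 0 -> ev w y1 = ev w y2.
Proof.
move=> H Hw; apply/eqP; rewrite -subr_eq0 /ev -sumrB; apply/eqP.
have HH : \sum_i (fun i => y1 i - y2 i) i *: e i = 0.
  by under eq_bigr do rewrite scalerBl; rewrite sumrB H subrr.
rewrite -[RHS](keyK Hai Hs _ w HH Hw).
by apply: eq_bigr => i _; rewrite mulrBr.
Qed.
Arguments keyK2 {R n e}.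

Lemma rep_e (R : realFieldType) (n : nat) (e : 'I_n.+1 -> 'rV[R]_n) i :
  e i = \sum_l dl i l *: e l.
Proof.
rewrite (bigD1 i) //= /dl eqxx scale1r big1 ?addr0 // => l /negbTE ->.
by rewrite scale0r.
Qed.
Arguments rep_e {R n}.

Lemma e_inj (R : realFieldType) (n : nat) (e : 'I_n.+1 -> 'rV[R]_n)
  (Hai : affinely_independent e) (Hs : \sum_i e i = 0) : injective e.
Proof.
move=> a b H; apply/eqP; apply/negPn/negP => hab.
have := keyK2 Hai Hs (dl a) (dl b) (W 0 1 a (-1) b 0 b) (etrans (esym (rep_e e a)) (etrans H (rep_e e b))).
rewrite sum_W ev_dl ev_dl /W /dl eqxx (negbTE hab) eq_sym (negbTE hab).
rewrite eqxx /= mul0r add0r subrr addr0 => /(_ erefl).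
rewrite !mulr1 !mulr0; lra.
Qed.

Definition xpf {R : realFieldType} {n : nat} (S : {set 'I_n.+1}) (lam : 'I_n.+1 -> R) :
  'I_n.+1 -> R := fun l => if l \in S then lam l else 0.

Lemma rep_p (R : realFieldType) (n : nat) (e : 'I_n.+1 -> 'rV[R]_n) (S : {set 'I_n.+1})
  (lam : 'I_n.+1 -> R) : \sum_(i in S) lam i *: e i = \sum_i xpf S lam i *: e i.
Proof.
rewrite big_mkcond; apply: eq_bigr => i _; rewrite /xpf; case: ifP => //.
by rewrite scale0r.
Qed.

Lemma sum_xpf (R : realFieldType) (n : nat) (S : {set 'I_n.+1}) (lam : 'I_n.+1 -> R) :
  \sum_l xpf S lam l = \sum_(i in S) lam i.
Proof. by rewrite [RHS]big_mkcond. Qed.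

Lemma ev_cdl (R : realFieldType) (n : nat) (w : 'I_n.+1 -> R) (c : R) i :
  ev w (fun l => c * dl i l) = c * w i.
Proof.
rewrite /ev (eq_bigr (fun l => c * (w l * dl i l))); last by move=> l _; rewrite mulrCA.
by rewrite -big_distrr /= -/(ev w (dl i)) ev_dl.
Qed.

Lemma rep_ce (R : realFieldType) (n : nat) (e : 'I_n.+1 -> 'rV[R]_n) (c : R) i :
  c *: e i = \sum_l (c * dl i l) *: e l.
Proof.
rewrite {1}(rep_e e i) scaler_sumr; apply: eq_bigr => l _; by rewrite scalerA.
Qed.

Lemma NE (R : realFieldType) (n : nat) (e : 'I_n.+1 -> 'rV[R]_n)
  (Hai : affinely_independent e) (Hs : \sum_i e i = 0)
  (v : 'rV[R]_n) (c : R) (y : 'I_n.+1 -> R) (hc : 0 < c)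
  (Hv : c *: v = \sum_i y i *: e i) (i m t : 'I_n.+1) :
  i != m -> y t <= 0 -> 0 < y m -> v != e i.
Proof.
move=> im yt ym; apply/eqP => hv.
have := keyK2 Hai Hs y (fun l => c * dl i l) (W 0 1 t (-1) m 0 m).
rewrite -Hv -rep_ce hv sum_W ev_W ev_cdl /W /dl (negbTE im).
rewrite mul0r add0r subrr addr0 => /(_ erefl erefl).
case: (i == t) => /= H; rewrite ?mulr0n ?mulr1n in H; clear -H hc yt ym; nra.
Qed.
Arguments NE {R n e}.

Lemma A1 (R : realFieldType) (n : nat) (e : 'I_n.+1 -> 'rV[R]_n) (X : seq 'rV[R]_n)
  (Hai : affinely_independent e) (Hs : \sum_i e i = 0)
  (HEX : forall i, e i \in X)
  (HXgood : forall A : seq 'rV[R]_n, uniq A -> size A = n.+1 ->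
              {subset A <= X} -> good_position A)
  (p : 'rV[R]_n) (Hp : p \in X) (S : {set 'I_n.+1}) (c : R) (lam : 'I_n.+1 -> R)
  (hc : 0 < c) (Hrep : c *: p = \sum_(i in S) lam i *: e i)
  (Hge : forall i, i \in S -> 1 <= lam i)
  (m : 'I_n.+1) (mS : m \in S) (lm : lam m = 1)
  (j k : 'I_n.+1) (jS : j \in S) (kS : k \in S) (jk : j != k)
  (lj : 1 < lam j) (lk : 1 < lam k) (t : 'I_n.+1) (tS : t \notin S) : False.
Proof.
rewrite rep_p in Hrep.
set r := None :: [seq Some i | i <- enum (predC1 m)].
have memr o : (o \in r) = (if o is Some i then i != m else true).
  case: o => [i|]; last by rewrite inE eqxx.
  by rewrite inE /= (mem_map (@Some_inj _)) mem_enum inE.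
set f := fun o : option 'I_n.+1 => if o is Some i then e i else p.
set x := fun o : option 'I_n.+1 => if o is Some i then dl i else xpf S lam.
set s := fun o : option 'I_n.+1 => if o is Some _ then (1:R) else c.
have xpt : xpf S lam t = 0 by rewrite /xpf (negbTE tS).
have xpm : xpf S lam m = 1 by rewrite /xpf mS.
have pe i : i != m -> p != e i.
  move=> im; apply: (NE Hai Hs p c _ hc Hrep i m t im); rewrite ?xpt ?xpm //; lra.
have einj := @e_inj R n e Hai Hs.
have Hu : uniq [seq f o | o <- r].
  rewrite map_inj_in_uniq.
    rewrite /r /= (map_inj_uniq (@Some_inj _)) enum_uniq andbT.
    by apply/mapP => -[].
  move=> [a|] [b|]; rewrite !memr /f //=.
  - by move=> _ _ /einj ->.
  - by move=> am _ /eqP; rewrite eq_sym (negbTE (pe a am)).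
  - by move=> _ bm /eqP; rewrite (negbTE (pe b bm)).
have Hsz : size [seq f o | o <- r] = n.+1.
  by rewrite size_map /= size_map -cardE cardC1 card_ord.
have Hsub : {subset [seq f o | o <- r] <= X}.
  by move=> v /mapP [[a|] _ ->]; rewrite /f. 
apply: (HXgood _ Hu Hsz Hsub).
apply: (@conical_cert R n e Hai Hs _ r f x s).
- move=> [a|] _ /=; split => //; first by rewrite scale1r; exact: rep_e.
- have hsum : lam j <= \sum_(i in S) lam i.
    rewrite (bigD1 j) //= lerDl sumr_ge0 // => i /andP [hi _].
    by apply: le_trans (Hge i hi).
  set N : R := n.+1%:R.
  set M := N / (lam j - 1).
  have hM : M * (lam j - 1) = N by rewrite /M divfK // subr_eq0 gt_eqF.
  have M0 : 0 <= M by rewrite /M divr_ge0 // ?ler0n // subr_ge0 ltW.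
  exists (W 1 (- N - M) m M j 0 j); split.
    by rewrite sum_W -/N; ring.
  move=> [a|]; rewrite memr /x => am.
    rewrite ev_dl /W /dl (negbTE am) /=.
    case: (a == j); rewrite /= ?mulr0n ?mulr1n; lra.
  rewrite ev_W sum_xpf xpm /xpf jS.
  clear -hM hsum lj; nra.
- move=> [i|]; rewrite memr => im.
  + set s' := if i == j then k else j.
    set ell := if i \in S then lam i else 1.
    have s'S : s' \in S by rewrite /s'; case: ifP.
    have ls : 1 < lam s' by rewrite /s'; case: ifP.
    have si : s' != i.
      rewrite /s'; case: ifP => [/eqP -> |]; first by rewrite eq_sym.
      by move/negbT; rewrite eq_sym.
    have sm : s' != m by apply/eqP => hsm; move: ls; rewrite hsm lm ltxx.
    have ell1 : 1 <= ell by rewrite /ell; case: ifP => // /Hge.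
    exists (W 0 (ell - 1) s' (lam s' - ell) m (-(lam s' - 1)) i); split.
      by rewrite sum_W; ring.
    split.
      rewrite /x ev_dl /W /dl eq_sym (negbTE si) (negbTE im) eqxx /=.
      rewrite ?mulr0n ?mulr1n; lra.
    move=> [l|]; rewrite memr => lm' hf.
      have li : l != i by apply: contraNneq hf => ->.
      rewrite /x ev_dl /W /dl (negbTE li) (negbTE lm') /=.
      case: (l == s'); rewrite /= ?mulr0n ?mulr1n; lra.
    rewrite /x ev_W /xpf s'S mS lm /ell.
    case: ifP => _; last by clear -ls; lra.
    by rewrite le_eqVlt; apply/orP; left; apply/eqP; ring.
  + exists (W 0 1 t (-1) m 0 m); split.
      by rewrite sum_W; ring.
    split.
      by rewrite /x ev_W xpt xpm; lra.
    move=> [l|]; rewrite memr => lm' hf; last by rewrite eqxx in hf.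
    rewrite /x ev_dl /W /dl (negbTE lm') /=.
    case: (l == t); rewrite /= ?mulr0n ?mulr1n; lra.
Qed.

Lemma A2 (R : realFieldType) (n : nat) (e : 'I_n.+1 -> 'rV[R]_n) (X : seq 'rV[R]_n)
  (Hai : affinely_independent e) (Hs : \sum_i e i = 0)
  (HEX : forall i, e i \in X)
  (HXgood : forall A : seq 'rV[R]_n, uniq A -> size A = n.+1 ->
              {subset A <= X} -> good_position A)
  (p q : 'rV[R]_n) (Hp : p \in X) (Hq : q \in X) (pq : p != q)
  (S : {set 'I_n.+1}) (c d : R) (lam mu : 'I_n.+1 -> R)
  (hc : 0 < c) (Hrep : c *: p = \sum_(i in S) lam i *: e i)
  (hd : 0 < d) (Hrepq : d *: q = \sum_(i in S) mu i *: e i)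
  (Hge : forall i, i \in S -> 1 <= lam i)
  (Hgeq : forall i, i \in S -> 1 <= mu i)
  (j k : 'I_n.+1) (jS : j \in S) (kS : k \in S) (jk : j != k)
  (Hl1 : forall i, i \in S -> i != j -> lam i = 1)
  (Hm1 : forall i, i \in S -> i != k -> mu i = 1)
  (lj : 1 < lam j) (mk : 1 < mu k)
  (m : 'I_n.+1) (mS : m \in S) (mj : m != j) (mk' : m != k)
  (t : 'I_n.+1) (tS : t \notin S) : False.
Proof.
rewrite rep_p in Hrep; rewrite rep_p in Hrepq.
have mt : m != t by apply: contraNneq tS => <-.
set r := None :: Some None :: [seq Some (Some i) | i <- enum (~: [set m; t])].
have memr o : (o \in r) = (if o is Some (Some i) then (i != m) && (i != t) else true).
  case: o => [[i|]|]; rewrite !inE //=.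
  by rewrite (mem_map (fun a b (h : Some (Some a) = Some (Some b)) => Some_inj (Some_inj h)))
    mem_enum !inE negb_or.
set f := fun o : option (option 'I_n.+1) =>
  match o with Some (Some i) => e i | Some None => q | None => p end.
set x := fun o : option (option 'I_n.+1) =>
  match o with Some (Some i) => dl i | Some None => xpf S mu | None => xpf S lam end.
set s := fun o : option (option 'I_n.+1) =>
  match o with Some (Some _) => (1:R) | Some None => d | None => c end.
have xpt : xpf S lam t = 0 by rewrite /xpf (negbTE tS).
have xqt : xpf S mu t = 0 by rewrite /xpf (negbTE tS).
have xpm : xpf S lam m = 1 by rewrite /xpf mS Hl1.
have xqm : xpf S mu m = 1 by rewrite /xpf mS Hm1.
have xp0 i : 0 <= xpf S lam i.
  by rewrite /xpf; case: ifP => // /Hge; apply: le_trans.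
have xq0 i : 0 <= xpf S mu i.
  by rewrite /xpf; case: ifP => // /Hgeq; apply: le_trans.
have pe i : i != m -> p != e i.
  move=> im; apply: (NE Hai Hs p c _ hc Hrep i m t im); rewrite ?xpt ?xpm //; lra.
have qe i : i != m -> q != e i.
  move=> im; apply: (NE Hai Hs q d _ hd Hrepq i m t im); rewrite ?xqt ?xqm //; lra.
have einj := @e_inj R n e Hai Hs.
have Hu : uniq [seq f o | o <- r].
  rewrite map_inj_in_uniq.
    rewrite /r /= !inE /= (map_inj_uniq (fun a b (h : Some (Some a) = Some (Some b)) => Some_inj (Some_inj h))) enum_uniq andbT.
    by apply/andP; split; apply/mapP => -[].
  move=> [[a|]|] [[b|]|]; rewrite !memr /f //=.
  - by move=> _ _ /einj ->.
  - by move=> /andP [am _] _ /eqP; rewrite eq_sym (negbTE (qe a am)).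
  - by move=> /andP [am _] _ /eqP; rewrite eq_sym (negbTE (pe a am)).
  - by move=> _ /andP [bm _] /eqP; rewrite (negbTE (qe b bm)).
  - by move=> _ _ /eqP; rewrite eq_sym (negbTE pq).
  - by move=> _ /andP [bm _] /eqP; rewrite (negbTE (pe b bm)).
  - by move=> _ _ /eqP; rewrite (negbTE pq).
have Hsz : size [seq f o | o <- r] = n.+1.
  rewrite size_map /= size_map -cardE.
  have := cardsC [set m; t]; rewrite cards2 mt card_ord /=.
  by move=> H; rewrite -[RHS]H.
have Hsub : {subset [seq f o | o <- r] <= X}.
  by move=> v /mapP [[[a|]|] _ ->]; rewrite /f.
apply: (HXgood _ Hu Hsz Hsub).
apply: (@conical_cert R n e Hai Hs _ r f x s).
- move=> [[a|]|] _ /=; split => //; first by rewrite scale1r; exact: rep_e.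
- have hsum : lam m <= \sum_(i in S) lam i.
    rewrite (bigD1 m) //= lerDl sumr_ge0 // => i /andP [hi _].
    by apply: le_trans (Hge i hi).
  have hsumq : mu m <= \sum_(i in S) mu i.
    rewrite (bigD1 m) //= lerDl sumr_ge0 // => i /andP [hi _].
    by apply: le_trans (Hgeq i hi).
  rewrite Hl1 // in hsum; rewrite Hm1 // in hsumq.
  set N : R := n.+1%:R.
  exists (W 1 (- N) t 0 t 0 t); split.
    by rewrite sum_W -/N; ring.
  move=> [[a|]|]; rewrite memr /x.
  + move=> /andP [am at'].
    rewrite ev_dl /W /dl (negbTE at') /= ?mulr0n; lra.
  + by move=> _; rewrite ev_W sum_xpf xqt; lra.
  + by move=> _; rewrite ev_W sum_xpf xpt; lra.
- have lk : lam k = 1 by rewrite Hl1 // eq_sym.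
  have mj' : mu j = 1 by rewrite Hm1.
  move=> [[i|]|]; rewrite memr.
  + move=> /andP [im it].
    set be := xpf S lam i + xpf S mu i.
    exists (W 0 (1 - be) t be m (-1) i); split.
      by rewrite sum_W; ring.
    split.
      rewrite /x ev_dl /W /dl (negbTE im) (negbTE it) eqxx /= ?mulr0n ?mulr1n; lra.
    move=> [[l|]|]; rewrite memr => hl hf.
    * have li : l != i by apply: contraNneq hf => ->.
      case/andP: hl => lm' lt.
      rewrite /x ev_dl /W /dl (negbTE li) (negbTE lm') (negbTE lt) /= ?mulr0n; lra.
    * rewrite /x ev_W xqt xqm /be; have := xp0 i; lra.
    * rewrite /x ev_W xpt xpm /be; have := xq0 i; lra.
  + move=> _.
    have tj : t != j by apply: contraNneq tS => ->.
    exists (W 0 (lam j - 1) t (- lam j) m 1 j); split.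
      by rewrite sum_W; ring.
    split.
      rewrite /x ev_W xqt xqm /xpf jS mj'; lra.
    move=> [[l|]|]; rewrite memr => hl hf.
    * case/andP: hl => lm' lt.
      rewrite /x ev_dl /W /dl (negbTE lm') (negbTE lt) /=.
      case: (l == j); rewrite /= ?mulr0n ?mulr1n; lra.
    * by rewrite eqxx in hf.
    * rewrite /x ev_W xpt xpm /xpf jS; lra.
  + move=> _.
    exists (W 0 (mu k - 1) t (- mu k) m 1 k); split.
      by rewrite sum_W; ring.
    split.
      rewrite /x ev_W xpt xpm /xpf kS lk; lra.
    move=> [[l|]|]; rewrite memr => hl hf.
    * case/andP: hl => lm' lt.
      rewrite /x ev_dl /W /dl (negbTE lm') (negbTE lt) /=.
      case: (l == k); rewrite /= ?mulr0n ?mulr1n; lra.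
    * rewrite /x ev_W xqt xqm /xpf kS; lra.
    * by rewrite eqxx in hf.
Qed.

Lemma S_proper (R : realFieldType) (n : nat) (e : 'I_n.+1 -> 'rV[R]_n)
  (Hai : affinely_independent e) (Hs : \sum_i e i = 0)
  (p : 'rV[R]_n) (S : {set 'I_n.+1}) (HSp : is_support e p S)
  (c : R) (lam : 'I_n.+1 -> R)
  (hc : 0 < c) (Hrep : c *: p = \sum_(i in S) lam i *: e i)
  (Hge : forall i, i \in S -> 1 <= lam i)
  (m0 : 'I_n.+1) (m0S : m0 \in S) (lm0 : lam m0 = 1) : exists t, t \notin S.
Proof.
case: (pickP (fun t => t \notin S)) => [t ht|hall]; first by exists t.
have hS i : i \in S by move: (hall i) => /= /negbFE.
exfalso; apply: (HSp.2 (S :\ m0) (properD1 m0S)).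
have einj := @e_inj R n e Hai Hs.
exists (fun a => \sum_(i | e i == a) (if i \in S then (lam i - 1) / c else 0)).
split.
  move=> a; apply: sumr_ge0 => i _; case: ifP => // /Hge h.
  by rewrite divr_ge0 ?subr_ge0 // ltW.
have Hu : uniq (verts e (S :\ m0)) by rewrite /verts (map_inj_uniq einj) enum_uniq.
rewrite (undup_id Hu) /verts big_map big_enum /=.
have hcf i : \sum_(i0 | e i0 == e i) (if i0 \in S then (lam i0 - 1) / c else 0)
    = (lam i - 1) / c.
  rewrite (eq_bigl (fun i0 => i0 == i)); last first.
    by move=> i0; apply/eqP/eqP => [/einj|->].
  by rewrite big_pred1_eq hS.
under eq_bigr do rewrite hcf.
have H1 : \sum_(i in S :\ m0) (lam i - 1) *: e i = \sum_(i in S) (lam i - 1) *: e i.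
  rewrite [RHS](bigD1 m0) //= lm0 subrr scale0r add0r.
  by apply: eq_bigl => i; rewrite in_setD1 andbC.
have H2 : \sum_(i in S) (lam i - 1) *: e i = c *: p.
  under eq_bigr do rewrite scalerBl scale1r.
  have hSe : \sum_(i in S) e i = 0.
    by rewrite (eq_bigl xpredT) ?Hs // => i; rewrite hS.
  by rewrite sumrB hSe subr0 Hrep.
have -> : p = c^-1 *: (c *: p) by rewrite scalerA mulVf ?scale1r // gt_eqF.
rewrite -H2 -H1 scaler_sumr; apply: eq_bigr => i _.
by rewrite scalerA mulrC.
Qed.

Theorem proposition6p3 (R : realFieldType) (n : nat)
  (e : 'I_n.+1 -> 'rV[R]_n) (X : seq 'rV[R]_n)
  (He_simplex : affinely_independent e)
  (He_sum : \sum_i e i = 0)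
  (HX0 : 0 \notin X)
  (HEX : forall i, e i \in X)
  (HXmult : forall x y, x \in X -> y \in X -> forall c : R, 0 < c ->
              x = c *: y -> x = y)
  (HXgood : forall A : seq 'rV[R]_n, uniq A -> size A = n.+1 ->
              {subset A <= X} -> good_position A)
  (p q : 'rV[R]_n) (Hp : p \in X) (Hq : q \in X)
  (S : {set 'I_n.+1})
  (HSp : is_support e p S) (HSq : is_support e q S)
  (HS2 : (2 < #|S|)%N) :
  forall j k : 'I_n.+1,
    strange_index e p S j -> strange_index e q S k -> j = k.
Proof.
move=> j k [jS [c [lam [hc Hrep Hge [m0 m0S lm0] lj]]]]
  [kS [d [mu [hd Hrepq Hgeq [m1 m1S mm1] mk]]]].
have [t tS] := @S_proper R n e He_simplex He_sum p S HSp c lam hc Hrep Hge m0 m0S lm0.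
apply/eqP; apply/negPn/negP => jk.
case: (boolP (p == q)) => [/eqP pq | pq].
  subst q.
  have key l : l \in S -> d * lam l = c * mu l.
    move=> lS.
    have Hw : \sum_i (W 0 1 l (-1) t 0 t : 'I_n.+1 -> R) i = 0 by rewrite sum_W; ring.
    have HH : \sum_i (d * xpf S lam i) *: e i = \sum_i (c * xpf S mu i) *: e i.
      under eq_bigr do rewrite -scalerA.
      under [RHS]eq_bigr do rewrite -scalerA.
      rewrite -!scaler_sumr -!rep_p -Hrep -Hrepq !scalerA.
      by rewrite mulrC.
    have := keyK2 He_simplex He_sum _ _ _ HH Hw.
    rewrite !ev_W /xpf lS (negbTE tS).
    move=> H; clear -H; lra.
  have h0 := key m0 m0S; have h1 := key m1 m1S.
  rewrite lm0 in h0; rewrite mm1 in h1.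
  have g0 := Hgeq m0 m0S; have g1 := Hge m1 m1S.
  have cd : c = d by clear -h0 h1 g0 g1 hc hd; nra.
  subst d.
  have lk : lam k = mu k by move: (key k kS) => /(mulfI (negbT (gt_eqF hc))).
  rewrite -lk in mk.
  exact: (@A1 R n e X He_simplex He_sum HEX HXgood p Hp S c lam hc Hrep Hge
    m0 m0S lm0 j k jS kS jk lj mk t tS).
have Hl1 i : i \in S -> i != j -> lam i = 1.
  move=> iS ij; apply/eqP; rewrite eq_le Hge // andbT leNgt; apply/negP => li.
  exact: (@A1 R n e X He_simplex He_sum HEX HXgood p Hp S c lam hc Hrep Hge
    m0 m0S lm0 j i jS iS (ltac:(by rewrite eq_sym)) lj li t tS).
have Hm1 i : i \in S -> i != k -> mu i = 1.
  move=> iS ik; apply/eqP; rewrite eq_le Hgeq // andbT leNgt; apply/negP => mi.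
  exact: (@A1 R n e X He_simplex He_sum HEX HXgood q Hq S d mu hd Hrepq Hgeq
    m1 m1S mm1 k i kS iS (ltac:(by rewrite eq_sym)) mk mi t tS).
have : (0 < #|S :\ j :\ k|)%N.
  move: HS2; rewrite (cardsD1 j S) (cardsD1 k (S :\ j)) jS in_setD1 kS eq_sym jk /=.
  by case: #|_|.
rewrite card_gt0 => /set0Pn [m]; rewrite !in_setD1 => /and3P [mk' mj mS].
exact: (@A2 R n e X He_simplex He_sum HEX HXgood p q Hp Hq pq S c d lam mu hc Hrep
  hd Hrepq Hge Hgeq j k jS kS jk Hl1 Hm1 lj mk m mS mj mk' t tS).
Qed.
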